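(* Let $n\ge1$, $d\ge0$, and let $A\subseteq\mathbb{F}_3^n$ be such that there are no $a,b,c\in A$ with $b\neq c$ and $a+b+c=0$. Let $P\in\mathbb{F}_3[x_1,\dots,x_n]$ be a polynomial of total degree at most $d$, with every variable occurring with exponent at most $2$, such that $P(x)=0$ for all $x\in\mathbb{F}_3^n\setminus A$. Then the number of $a\in A$ with $P(a)\neq0$ is at most $2\,|M(n,\lfloor d/2\rfloor)|$.
   Context: $\mathbb{F}_3$ is the field of integers modulo $3$. For integers $n\ge1$ and $e\ge 0$, $M(n,e)$ denotes the set of monomials $x_1^{\alpha_1}\cdots x_n^{\alpha_n}$ with $0\le\alpha_i\le2$ for all $i$ and $\alpha_1+\dots+\alpha_n\le e$; thus $|M(n,e)|=\sum_{i=0}^{e}\binom{n}{i}_2$, where $\binom{n}{i}_2$ is the coefficient of $x^i$ in $(1+x+x^2)^n$. *)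

(* Defs.v *)
From HB Require Import structures.
From mathcomp Require Import all_boot all_order all_algebra.
Set Implicit Arguments. Unset Strict Implicit. Unset Printing Implicit Defensive.
Import GRing.Theory.
Local Open Scope ring_scope.

(* Exponent vectors of reduced monomials x_1^{e_1}...x_n^{e_n}, 0 <= e_i <= 2. *)
Definition mono (n : nat) := {ffun 'I_n -> 'I_3}.

Definition mdeg (n : nat) (m : mono n) : nat := (\sum_(i < n) (m i : nat))%N.

Definition Mset (n e : nat) : {set mono n} := [set m : mono n | (mdeg m <= e)%N].

(* A reduced polynomial over F_3 (each variable with exponent <= 2) is given
   by its coefficient function on monomials. *)
Definition rpoly (n : nat) := {ffun mono n -> 'F_3}.

Definition peval (n : nat) (P : rpoly n) (x : 'rV['F_3]_n) : 'F_3 :=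
  \sum_(m : mono n) P m * \prod_(i < n) (x ord0 i) ^+ (m i : nat).

(* Main.v *)
Require Import Defs.
From HB Require Import structures.
From mathcomp Require Import all_boot all_order all_algebra.
From mathcomp Require Import ring zify.
Set Implicit Arguments. Unset Strict Implicit.
Import GRing.Theory.
Local Open Scope ring_scope.

Definition cc (m j k : 'I_3) : 'F_3 :=
  if (j + k == m)%N then (-1) ^+ m * ('C(m, j))%:R else 0.

Lemma coordE (m : 'I_3) (x y : 'F_3) :
  (- (x + y)) ^+ m = \sum_(j < 3) \sum_(k < 3) cc m j k * x ^+ j * y ^+ k.
Proof.
rewrite !big_ord_recr !big_ord0 /= /cc.
case: m => [[|[|[|]]]] //= _; rewrite ?bin0 ?bin1 ?binn; ring.
Qed.

Lemma F3_3 (x : 'F_3) : - (x + x) = x.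
Proof.
have h3 : (3%:R : 'F_3) = 0 by apply/val_inj.
apply/eqP; rewrite -subr_eq0 (_ : _ - x = -(x * 3%:R)); last by ring.
by rewrite h3 mulr0 oppr0.
Qed.

Definition mon n (f : mono n) (x : 'rV['F_3]_n) : 'F_3 :=
  \prod_(i < n) x ord0 i ^+ (f i : nat).
Definition coef n (P : rpoly n) (f g : mono n) : 'F_3 :=
  \sum_(m : mono n) P m * \prod_(i < n) cc (m i) (f i) (g i).

Lemma expand n (P : rpoly n) b c : peval P (-(b+c)) =
  \sum_(f : mono n) \sum_(g : mono n) coef P f g * mon f b * mon g c.
Proof.
rewrite /peval.
transitivity (\sum_(m : mono n) \sum_(f : mono n) \sum_(g : mono n)
   P m * (\prod_(i < n) cc (m i) (f i) (g i)) * mon f b * mon g c : 'F_3).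
  apply: eq_bigr => m _.
  have E : \prod_(i < n) (-(b+c)) ord0 i ^+ (m i : nat) =
     \sum_(f : mono n) \sum_(g : mono n)
       (\prod_(i < n) cc (m i) (f i) (g i)) * mon f b * mon g c.
    under eq_bigr => i _ do rewrite !mxE coordE.
    rewrite bigA_distr_bigA /=; apply: eq_bigr => f _.
    rewrite bigA_distr_bigA; apply: eq_bigr => g _.
    by rewrite !big_split.
  rewrite E mulr_sumr; apply: eq_bigr => f _; rewrite mulr_sumr.
  by apply: eq_bigr => g _; rewrite !mulrA.
rewrite exchange_big; apply: eq_bigr => f _; rewrite exchange_big.
apply: eq_bigr => g _.
by rewrite /coef !mulr_suml; apply: eq_bigr => m _.
Qed.

Lemma coef0 n d (P : rpoly n)
  (hdeg : forall m : mono n, (d < mdeg m)%N -> P m = 0) (f g : mono n) :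
  (d < mdeg f + mdeg g)%N -> coef P f g = 0.
Proof.
move=> hfg; rewrite /coef; apply: big1 => m _.
have [/forallP H|] := boolP [forall i, (f i + g i == m i)%N].
  have -> : P m = 0.
    apply: hdeg; suff -> : mdeg m = (mdeg f + mdeg g)%N by [].
    rewrite /mdeg -big_split /=; apply: eq_bigr => i _.
    by rewrite (eqP (H i)).
  by rewrite mul0r.
rewrite negb_forall => /existsP [i Hi].
by rewrite (bigD1 i) //= /cc (negbTE Hi) mul0r mulr0.
Qed.

Lemma rv3 n (x : 'rV['F_3]_n) : - (x + x) = x.
Proof. by apply/rowP => l; rewrite !mxE F3_3. Qed.

Lemma rank_sum1 k (T : finType) (B : {set T}) (u : T -> 'cV['F_3]_k)
  (v : T -> 'rV['F_3]_k) : (\rank (\sum_(t in B) u t *m v t)%R <= #|B|)%N.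
Proof.
rewrite -sum1_card; apply: (big_ind2 (fun M r => \rank M <= r)%N).
- by rewrite mxrank0.
- move=> M1 r1 M2 r2 h1 h2; apply: leq_trans (leq_add h1 h2); exact: mxrank_add.
- by move=> t _; apply: leq_trans (mxrankM_maxr _ _) (rank_leq_row _).
Qed.

Unset Implicit Arguments.
Unset Strict Implicit.

Theorem mainTheorem4 (n d : nat) (hn : (1 <= n)%N) (A : {set 'rV['F_3]_n})
  (hA : forall a b c, a \in A -> b \in A -> c \in A -> b != c -> a + b + c != 0)
  (P : rpoly n)
  (hdeg : forall m : mono n, (d < mdeg m)%N -> P m = 0)
  (hvan : forall x : 'rV['F_3]_n, x \notin A -> peval P x = 0) :
  (#|[set a in A | peval P a != 0%R]| <= 2 * #|Mset n d./2|)%N.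
Proof.
set S := [set a in A | peval P a != 0].
set k := #|S|.
pose s (i : 'I_k) : 'rV['F_3]_n := enum_val i.
pose Mx := \matrix_(i < k, j < k) peval P (-(s i + s j)).
have Hs i : s i \in S := enum_valP i.
have sA i : s i \in A by move: (Hs i); rewrite inE => /andP[].
have sP i : peval P (s i) != 0 by move: (Hs i); rewrite inE => /andP[].
have Hdiag : Mx = diag_mx (\row_i peval P (s i)).
  apply/matrixP => i j; rewrite !mxE.
  case: (eqVneq i j) => [<-|ij]; first by rewrite rv3.
  rewrite (_ : _ *+ false = 0) //; apply: hvan; apply/negP => ha.
  have sij : s i != s j by rewrite (inj_eq enum_val_inj).
  have := hA _ _ _ ha (sA i) (sA j) sij.
  by rewrite -addrA addNr eqxx.
have rk : \rank Mx = k.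
  rewrite Hdiag mxrank_unit // unitmxE det_diag unitfE.
  by apply/prodf_neq0 => i _; rewrite mxE sP.
set H := d./2.
have hd : (d < 2 * H + 2)%N.
  have := odd_double_half d; rewrite -/H -muln2; case: (odd d) => /=; lia.
have Hexp : Mx =
  \sum_(f in Mset n H) (\col_i mon f (s i)) *m
      (\row_j \sum_(g : mono n) coef P f g * mon g (s j)) +
  \sum_(g in Mset n H)
      (\col_i \sum_(f : mono n | (H < mdeg f)%N) coef P f g * mon f (s i)) *m
      (\row_j mon g (s j)).
  apply/matrixP => i j; rewrite !mxE expand !summxE.
  under [in RHS]eq_bigr do rewrite !mxE big_ord1 !mxE.
  under [X in _ = _ + X]eq_bigr do rewrite !mxE big_ord1 !mxE.
  rewrite (bigID (fun f => f \in Mset n H)) /=; congr (_ + _).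
    apply: eq_bigr => f _; rewrite mulr_sumr; apply: eq_bigr => g _; ring.
  under [in RHS]eq_bigr do rewrite mulr_suml.
  rewrite [RHS]exchange_big /=.
  apply: eq_big => [f|f hf]; first by rewrite inE ltnNge.
  rewrite (bigID (fun g => g \in Mset n H)) /= [X in _ + X]big1 ?addr0 //.
  move=> g hg; rewrite (coef0 hdeg) ?mul0r //.
  move: hf hg; rewrite !inE -!ltnNge; lia.
have rk2 : (\rank Mx <= 2 * #|Mset n H|)%N.
  rewrite Hexp; apply: leq_trans (mxrank_add _ _) _.
  by rewrite mul2n -addnn; apply: leq_add; apply: rank_sum1.
by rewrite -rk.
Qed.
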